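(* Let $r\ge4$, $l\ge r$, $k,\alpha,\beta\in\mathbb N$ with $\alpha+\beta+k(r-2)\equiv0\pmod l$ and $\gcd(k,\alpha,l)=\gcd(k,\beta,l)=1$; let $N_G=\mathbb Z^r+\mathbb Z\frac1l(k,\ldots,k,\alpha,\beta)^{\intercal}\subset\mathbb R^r$ ($k$ repeated $r-2$ times), $\mathfrak L=\{x\in\mathbb R^r:x_1=\cdots=x_{r-2}\}$ and $\overline{N_G}=N_G\cap\mathfrak L$. Let $n_1,n_2,n_3\in\overline{N_G}\setminus\{\mathbf 0\}$ be such that $\mathrm{pos}(n_1,n_2,n_3)$ is a $3$-dimensional basic cone w.r.t. $\overline{N_G}$. Then for every tuple of integers $1\le\xi_1<\xi_2<\cdots<\xi_{r-3}\le r-2$ the cone $\mathrm{pos}(n_1,n_2,n_3,e_{\xi_1},\ldots,e_{\xi_{r-3}})\subset\mathbb R^r$ is basic w.r.t. the lattice $N_G$.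
   Context: $e_1,\ldots,e_r$ are the standard unit vectors of $\mathbb R^r$. A simplicial cone generated by primitive lattice vectors is basic w.r.t. a lattice $N$ if its minimal generators form part of a $\mathbb Z$-basis of $N$ (here: a $\mathbb Z$-basis of $\overline{N_G}$, resp. of $N_G$). *)

(* Defs.v *)
(* Vectors of R^r with rational entries are 'rV[rat]_r
   (all vectors involved lie in Q^r). *)
From HB Require Import structures.
From mathcomp Require Import all_boot all_order all_algebra.
Unset Printing Implicit Defensive.
Import Order.TTheory GRing.Theory Num.Theory.
Local Open Scope ring_scope.

Definition lattice (r : nat) := 'rV[rat]_r -> Prop.

(* the vector (1/l)(k,...,k,alpha,beta), k repeated r-2 times (0-based
   coordinates 0..r-3 carry k, coordinate r-2 carries alpha, r-1 carries beta) *)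
Definition gen_vec (r l k alpha beta : nat) : 'rV[rat]_r :=
  \row_(i < r) ((if (i < r - 2)%N then k else if i == (r - 2)%N :> nat then alpha
                 else beta)%:R / l%:R).

Definition NG (r l k alpha beta : nat) : lattice r :=
  fun x => exists (z : 'rV[int]_r) (t : int),
    x = map_mx (fun a : int => a%:~R) z + t%:~R *: gen_vec r l k alpha beta.

Definition frakL (r : nat) (x : 'rV[rat]_r) : Prop :=
  forall i j : 'I_r, (i < r - 2)%N -> (j < r - 2)%N -> x 0 i = x 0 j.

Definition NGbar (r l k alpha beta : nat) : lattice r :=
  fun x => NG r l k alpha beta x /\ frakL r x.

Definition Zbasis (r : nat) (N : lattice r) (n : nat) (b : 'I_n -> 'rV[rat]_r) : Prop :=
  [/\ forall j, N (b j),
      row_free (\matrix_(j < n) b j) &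
      forall x, N x -> exists c : 'I_n -> int, x = \sum_(j < n) (c j)%:~R *: b j].

Definition primitive (r : nat) (N : lattice r) (p : 'rV[rat]_r) : Prop :=
  N p /\ forall lam : rat, 0 < lam < 1 -> ~ N (lam *: p).

(* the cone pos(u_1,...,u_m) is a simplicial cone (u linearly independent,
   so its rays are exactly the rays through the u_i) which is basic w.r.t. N:
   its minimal generators (the primitive vectors of N on the rays R_{>=0} u_i)
   form part of a Z-basis of N. *)
Definition basic_cone (r : nat) (N : lattice r) (m : nat) (u : 'I_m -> 'rV[rat]_r) : Prop :=
  row_free (\matrix_(i < m) u i) /\
  exists (p : 'I_m -> 'rV[rat]_r) (c : 'I_m -> rat),
    [/\ forall i, 0 < c i /\ u i = c i *: p i,
        forall i, primitive r N (p i) &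
        exists (n : nat) (b : 'I_n -> 'rV[rat]_r) (f : 'I_m -> 'I_n),
          [/\ Zbasis r N n b, injective f & forall i, b (f i) = p i]].

Definition unitv (r : nat) (j : 'I_r) : 'rV[rat]_r := \row_(i < r) (i == j)%:R.

Definition cone_family (r : nat) (nn : 'I_3 -> 'rV[rat]_r) (xi : 'I_(r - 3) -> 'I_r)
  : 'I_(3 + (r - 3)) -> 'rV[rat]_r :=
  fun i => match split i with inl a => nn a | inr b => unitv r (xi b) end.

(* Main.v *)
Set Warnings "-notation-overridden -ambiguous-paths".
Require Import Defs.
From HB Require Import structures.
From mathcomp Require Import all_boot all_order all_algebra.
From mathcomp Require Import zify.
From mathcomp Require Import ring lra.
Import Order.TTheory GRing.Theory Num.Theory.
Local Open Scope ring_scope.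
Set Implicit Arguments. Unset Strict Implicit.
Set Warnings "-notation-overridden -ambiguous-paths".

Lemma row_freeI m n (A : 'M[rat]_(m,n)) :
  (forall u : 'rV_m, u *m A = 0 -> u = 0) -> row_free A.
Proof.
move=> H; rewrite -kermx_eq0; apply/eqP/row_matrixP => i.
rewrite row0; apply: H; apply/sub_kermxP; exact: row_sub.
Qed.

Lemma row_freeE m n (A : 'M[rat]_(m,n)) (u : 'rV_m) :
  row_free A -> u *m A = 0 -> u = 0.
Proof. by move=> /row_free_inj H E; apply: H; rewrite /= E mul0mx. Qed.

Lemma mul_matrix_rows m n (u : 'rV[rat]_m) (w : 'I_m -> 'rV[rat]_n) :
  u *m (\matrix_i w i) = \sum_i u 0 i *: w i.
Proof. by rewrite mulmx_sum_row; apply: eq_bigr => i _; rewrite rowK. Qed.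

Lemma j0_exists r (xi : 'I_(r-3) -> 'I_r) : (3 <= r)%N -> injective xi ->
  (forall a, (xi a < r-2)%N) ->
  exists j0 : 'I_r, [/\ (j0 < r-2)%N, forall b, xi b != j0 &
     forall i : 'I_r, (i < r-2)%N -> i != j0 -> exists b, xi b = i].
Proof.
move=> hr inj hrng.
have hle : (r - 2 <= r)%N by rewrite leq_subr.
pose S := [set widen_ord hle i | i in 'I_(r-2)].
pose I := [set xi b | b in 'I_(r-3)].
have cS : #|S| = (r-2)%N by rewrite card_imset ?cardsT ?card_ord //; by move=> a b /(congr1 val) /= /val_inj.
have cI : #|I| = (r-3)%N by rewrite card_imset ?cardsT ?card_ord.
have inS : forall i : 'I_r, (i \in S) = (i < r-2)%N.
  move=> i; apply/imsetP/idP => [[j _ ->] /=|h]; first exact: ltn_ord.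
  by exists (Ordinal h) => //; apply: val_inj.
have IS : I \subset S by apply/subsetP => i /imsetP [b _ ->]; rewrite inS.
have : #|S :\: I| == 1%N.
  by rewrite cardsD (setIidPr IS) cS cI; apply/eqP; lia.
case/cards1P => j0 hj0.
have : j0 \in S :\: I by rewrite hj0 set11.
rewrite inE inS => /andP [nI lt]; exists j0; split => //.
  by move=> b; apply: contraNneq nI => <-; apply: imset_f.
move=> i hi ne.
have : i \notin S :\: I by rewrite hj0 inE.
rewrite inE inS hi andbT negbK => /imsetP [b _ ->]; by exists b.
Qed.

Definition zspan r m (w : 'I_m -> 'rV[rat]_r) (x : 'rV[rat]_r) :=
  exists c : 'I_m -> int, x = \sum_i (c i)%:~R *: w i.

Lemma zspan0 r m (w : 'I_m -> 'rV[rat]_r) : zspan w 0.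
Proof. by exists (fun _ => 0); rewrite big1 // => i _; rewrite scale0r. Qed.

Lemma zspanD r m (w : 'I_m -> 'rV[rat]_r) x y : zspan w x -> zspan w y -> zspan w (x + y).
Proof.
move=> [c ->] [d ->]; exists (fun i => c i + d i); rewrite -big_split /=.
by apply: eq_bigr => i _; rewrite intrD scalerDl.
Qed.

Lemma zspanZ r m (w : 'I_m -> 'rV[rat]_r) (a : int) x : zspan w x -> zspan w (a%:~R *: x).
Proof.
move=> [c ->]; exists (fun i => a * c i); rewrite scaler_sumr.
by apply: eq_bigr => i _; rewrite intrM scalerA.
Qed.

Lemma zspan_gen r m (w : 'I_m -> 'rV[rat]_r) j : zspan w (w j).
Proof.
exists (fun i => (i == j)%:R); rewrite (bigD1 j) //= eqxx scale1r big1 ?addr0 //.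
by move=> i /negbTE ->; rewrite scale0r.
Qed.

Lemma zspan_sub r m n (w : 'I_m -> 'rV[rat]_r) (v : 'I_n -> 'rV[rat]_r) (c : 'I_n -> int) :
  (forall j, zspan w (v j)) -> zspan w (\sum_j (c j)%:~R *: v j).
Proof.
move=> H; apply: (big_ind (zspan w)); [exact: zspan0 | exact: zspanD |].
by move=> j _; apply: zspanZ.
Qed.

Lemma zspan_trans r m n (w : 'I_m -> 'rV[rat]_r) (v : 'I_n -> 'rV[rat]_r) x :
  (forall j, zspan w (v j)) -> zspan v x -> zspan w x.
Proof. by move=> H [c ->]; apply: zspan_sub. Qed.

Lemma NGD r l k a b x y : NG r l k a b x -> NG r l k a b y -> NG r l k a b (x + y).
Proof.
move=> [z [t ->]] [z' [t' ->]]; exists (z + z'), (t + t').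
rewrite intrD scalerDl; apply/matrixP => i j; rewrite !mxE intrD.
by rewrite !addrA; congr (_ + _); rewrite -!addrA; congr (_ + _); rewrite addrC.
Qed.

Lemma NGZ r l k a b (c : int) x : NG r l k a b x -> NG r l k a b (c%:~R *: x).
Proof.
move=> [z [t ->]]; exists (c *: z), (c * t).
by rewrite scalerDr scalerA -intrM; congr (_ + _); apply/matrixP => i j; rewrite !mxE intrM.
Qed.

Lemma NG_unit r l k a b j : NG r l k a b (unitv r j).
Proof.
exists (\row_i (i == j)%:R), 0; rewrite scale0r addr0.
by apply/matrixP => i i'; rewrite !mxE; case: (i' == j).
Qed.

Lemma NG_sum r l k a b n (c : 'I_n -> int) (v : 'I_n -> 'rV[rat]_r) :
  (forall j, NG r l k a b (v j)) -> NG r l k a b (\sum_j (c j)%:~R *: v j).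
Proof.
move=> H; apply: (big_ind (NG r l k a b)); last by move=> j _; apply: NGZ.
  by exists 0, 0; rewrite scale0r addr0; apply/matrixP => i j; rewrite !mxE.
exact: NGD.
Qed.

Lemma frakL_lin r n (s : 'I_n -> rat) (w : 'I_n -> 'rV[rat]_r) :
  (forall j, frakL r (w j)) -> frakL r (\sum_j s j *: w j).
Proof.
move=> H i i' hi hi'; rewrite !summxE; apply: eq_bigr => j _; rewrite !mxE.
by rewrite (H j i i').
Qed.

Lemma frakL_scale r (s : rat) (w : 'rV[rat]_r) : frakL r w -> frakL r (s *: w).
Proof. by move=> H i i' hi hi'; rewrite !mxE (H i i'). Qed.

Lemma unitv_sum r n (s : 'I_n -> rat) (xi : 'I_n -> 'I_r) (i : 'I_r) :
  injective xi ->
  (\sum_b s b *: unitv r (xi b)) 0 i = if [pick b | xi b == i] is Some b then s b else 0.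
Proof.
move=> inj; rewrite summxE; case: pickP => [b /eqP hb | hn].
  rewrite (bigD1 b) //= !mxE hb eqxx mulr1 big1 ?addr0 // => b' nb.
  rewrite !mxE -hb; case: eqP => [/inj e|]; last by rewrite mulr0.
  by rewrite e eqxx in nb.
by rewrite big1 // => b _; rewrite !mxE eq_sym hn mulr0.
Qed.

Lemma cf_l r (w : 'I_3 -> 'rV[rat]_r) xi a : cone_family r w xi (lshift (r-3) a) = w a.
Proof. by rewrite /cone_family (unsplitK (inl a)). Qed.
Lemma cf_r r (w : 'I_3 -> 'rV[rat]_r) xi b : cone_family r w xi (rshift 3 b) = unitv r (xi b).
Proof. by rewrite /cone_family (unsplitK (inr b)). Qed.

Lemma family_free r (w : 'I_3 -> 'rV[rat]_r) (xi : 'I_(r-3) -> 'I_r) (j0 : 'I_r) :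
  injective xi -> (j0 < r-2)%N -> (forall b, xi b != j0) -> (forall b, xi b < r-2)%N ->
  (forall a, frakL r (w a)) -> row_free (\matrix_a w a) ->
  row_free (\matrix_i cone_family r w xi i).
Proof.
move=> inj hj0 nj0 hrng hL hfree; apply: row_freeI => u.
rewrite mul_matrix_rows big_split_ord /=.
under eq_bigr do rewrite cf_l.
under [X in _ + X]eq_bigr do rewrite cf_r.
set y := \sum_a _; set z := \sum_b _ => E.
have hz0 : z 0 j0 = 0.
  rewrite /z unitv_sum //; case: pickP => // b /eqP hb.
  by have := nj0 b; rewrite hb eqxx.
have Ey : y = - z by apply/eqP; rewrite -addr_eq0 E.
have yL : frakL r y by apply: frakL_lin.
have hy : y 0 j0 = 0 by rewrite Ey mxE hz0 oppr0.
have hzb : forall b, u 0 (rshift 3 b) = 0.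
  move=> b; have : z 0 (xi b) = u 0 (rshift 3 b).
    rewrite /z unitv_sum //; case: pickP => [b' /eqP /inj -> //|].
    by move=> /(_ b); rewrite eqxx.
  move=> <-; have e : y 0 (xi b) = - z 0 (xi b) by rewrite Ey mxE.
  by rewrite -[z 0 _]opprK -e (yL _ j0) ?hy ?oppr0.
have zz : z = 0 by rewrite /z big1 // => b _; rewrite hzb scale0r.
have yy : y = 0 by rewrite Ey zz oppr0.
have hya : forall a, u 0 (lshift (r-3) a) = 0.
  pose u' := \row_a u 0 (lshift (r-3) a).
  have : u' = 0.
    apply: (row_freeE hfree); rewrite mul_matrix_rows; apply: etrans yy.
    by apply: eq_bigr => a _; rewrite mxE.
  move=> h a; have : u' 0 a = 0 by rewrite h mxE.
  by rewrite mxE.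
apply/rowP => j; rewrite mxE -(splitK j); case: (split j) => a /=.
  exact: hya.
exact: hzb.
Qed.

Lemma L_rank r m (w : 'I_m -> 'rV[rat]_r) : (2 < r)%N ->
  (forall j, frakL r (w j)) -> row_free (\matrix_j w j) -> (m <= 3)%N.
Proof.
move=> hr hL hfree.
have h0 : (0 < r)%N by lia.
have h1 : (r - 2 < r)%N by lia.
have h2 : (r - 1 < r)%N by lia.
pose i0 := Ordinal h0; pose i1 := Ordinal h1; pose i2 := Ordinal h2.
pose sel (j : 'I_3) := if val j == 0%N then i0 else if val j == 1%N then i1 else i2.
pose P : 'M[rat]_(r,3) := \matrix_(i, j) (i == sel j)%:R.
set B := \matrix_j w j in hfree *.
suff : row_free (B *m P) by move/eqP <-; exact: rank_leq_col.
apply: row_freeI => u; rewrite mulmxA => H.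
set y := u *m B in H.
have yL : frakL r y by rewrite /y mul_matrix_rows; apply: frakL_lin.
have ysel : forall j, y 0 (sel j) = 0.
  move=> j; have : (y *m P) 0 j = 0 by rewrite H mxE.
  rewrite mxE (bigD1 (sel j)) //= [P _ _]mxE eqxx mulr1 big1 ?addr0 // => i ni.
  by rewrite [P _ _]mxE (negbTE ni) mulr0.
have y0 : y = 0.
  apply/rowP => i; rewrite [RHS]mxE.
  have [hi|hi] := ltnP i (r - 2).
    rewrite (yL i i0) //=; last by lia.
    by have := ysel (Ordinal (isT : (0 < 3)%N)).
  have [e|e] : i = i1 \/ i = i2.
    have hir := ltn_ord i. have : (i : nat) = (r-2)%N \/ (i:nat) = (r-1)%N by lia.
    by case=> e; [left|right]; apply: val_inj.
  1,2: subst.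
  - exact: (ysel (Ordinal (isT : (1 < 3)%N))).
  - exact: (ysel (Ordinal (isT : (2 < 3)%N))).
exact: (row_freeE hfree y0).
Qed.

Lemma NGN r l k a b x : NG r l k a b x -> NG r l k a b (- x).
Proof. by move=> h; have := NGZ (-1) h; rewrite scaleNr scale1r. Qed.

Lemma NGbar_span r l k a b (p : 'I_3 -> 'rV[rat]_r) n (bb : 'I_n -> 'rV_r) (f : 'I_3 -> 'I_n) :
  (2 < r)%N -> Zbasis r (NGbar r l k a b) n bb -> injective f -> (forall i, bb (f i) = p i) ->
  forall x, NGbar r l k a b x -> zspan p x.
Proof.
move=> hr [hN hfree hspan] inj hp.
have n3 : (n <= 3)%N.
  by apply: (L_rank (w := bb)) => // j; case: (hN j).
have onto : forall j, exists i, bb j = p i.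
  move=> j; have := inj_card_onto inj; rewrite !card_ord => /(_ n3 j) /codomP [i ->].
  by exists i.
move=> x /hspan [c ->]; apply: zspan_sub => j; case: (onto j) => i ->; exact: zspan_gen.
Qed.

Lemma unit_primitive r l k a b (j : 'I_r) : (4 <= r)%N -> (j < r - 2)%N ->
  primitive r (NG r l k a b) (unitv r j).
Proof.
move=> hr hj; split; first exact: NG_unit.
move=> lam /andP [l0 l1] [z [t E]].
have [j' [hj' nj]] : exists j' : 'I_r, (j' < r - 2)%N /\ j' != j.
  have h0 : (0 < r)%N by lia. have h1 : (1 < r)%N by lia.
  case: (eqVneq j (Ordinal h0)) => e.
    by exists (Ordinal h1); split; [rewrite /=; lia | rewrite e; apply/eqP => /(congr1 val)].
  by exists (Ordinal h0); split; [rewrite /=; lia | rewrite eq_sym].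
have ej : lam = (z 0 j)%:~R + t%:~R * (k%:R / l%:R).
  by have := congr1 (fun M : 'M[rat]_(1,r) => M 0 j) E; rewrite /= !mxE eqxx mulr1 hj.
have ej' : 0 = (z 0 j')%:~R + t%:~R * (k%:R / l%:R) :> rat.
  by have := congr1 (fun M : 'M[rat]_(1,r) => M 0 j') E; rewrite /= !mxE (negbTE nj) mulr0 hj'.
have : lam = (z 0 j - z 0 j')%:~R 
  by move: ej ej'; rewrite intrB; set s := _ * _; move=> ej ej'; lra.
move=> el; move: l0 l1; rewrite el.
set m := (z 0 j - z 0 j').
rewrite ltr0z -[1]/(1%:~R) ltr_int => l0 l1.
lia.
Qed.

Theorem lemma6p6 (r l k alpha beta : nat)
  (hr : (4 <= r)%N) (hl : (r <= l)%N)
  (hmod : ((alpha + beta + k * (r - 2)) %% l = 0)%N)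
  (hga : gcdn (gcdn k alpha) l = 1%N) (hgb : gcdn (gcdn k beta) l = 1%N)
  (nn : 'I_3 -> 'rV[rat]_r)
  (hn : forall i, NGbar r l k alpha beta (nn i) /\ nn i != 0)
  (hbasic : basic_cone r (NGbar r l k alpha beta) 3 nn)
  (xi : 'I_(r - 3) -> 'I_r)
  (hxi_inc : forall a b : 'I_(r - 3), (a < b)%N -> (xi a < xi b)%N)
  (hxi_rng : forall a, (xi a < r - 2)%N) :
  basic_cone r (NG r l k alpha beta) (3 + (r - 3)) (cone_family r nn xi).
Proof.
have hr3 : (2 < r)%N by lia.
have xinj : injective xi.
  move=> a b e; apply/val_inj; case: (ltngtP a b) => [h|h|//].
    by have := hxi_inc _ _ h; rewrite e ltnn.
  by have := hxi_inc _ _ h; rewrite e ltnn.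
have [j0 [hj0 nj0 onto]] := j0_exists hr3 xinj hxi_rng.
case: hbasic => nnfree [p [c [hpc hprim [n [bb [f [hZ finj hbf]]]]]]].
have pbar : forall a, NGbar r l k alpha beta (p a) by move=> a; case: (hprim a).
have pfree : row_free (\matrix_a p a).
  apply: row_freeI => u H.
  pose u' := \row_a (u 0 a / c a).
  have : u' = 0.
    apply: (row_freeE nnfree); rewrite mul_matrix_rows; apply: etrans H; rewrite mul_matrix_rows.
    apply: eq_bigr => a _; rewrite mxE; case: (hpc a) => ca ->.
    by rewrite scalerA mulfVK // gt_eqF.
  move=> h; apply/rowP => a; have : u' 0 a = 0 by rewrite h mxE.
  rewrite !mxE => /eqP; rewrite mulf_eq0 invr_eq0; case: (hpc a) => ca _.
  by rewrite (gt_eqF ca) orbF => /eqP.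
have spanbar := NGbar_span hr3 hZ finj hbf.
split.
  apply: (family_free xinj hj0 nj0 hxi_rng) => // a; by case: (hn a) => [[]].
exists (cone_family r p xi), (fun i => match split i with inl a => c a | inr _ => 1 end).
split.
- move=> i; rewrite /cone_family; case: (split i) => [a|b]; first exact: hpc.
  by rewrite scale1r ltr01.
- move=> i; rewrite /cone_family; case: (split i) => [a|b].
    case: (hprim a) => [[hN hL] hp]; split => // lam hlam hN'.
    by apply: (hp lam hlam); split => //; apply: frakL_scale.
  exact: unit_primitive.
exists (3 + (r - 3))%N, (cone_family r p xi), id; split => //.
split.
- move=> i; rewrite /cone_family; case: (split i) => [a|b]; first by case: (pbar a).
  exact: NG_unit.
- by apply: (family_free xinj hj0 nj0 hxi_rng) => // a; case: (pbar a).
move=> x hx; case: (hx) => [z [t Ex]].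
have hdiff : forall i : 'I_r, (i < r - 2)%N -> x 0 i - x 0 j0 = (z 0 i - z 0 j0)%:~R.
  move=> i hi; rewrite Ex !mxE hi hj0 intrB; ring.
pose d b := z 0 (xi b) - z 0 j0.
pose s := \sum_b (d b)%:~R *: unitv r (xi b).
have xbar : NGbar r l k alpha beta (x - s).
  split; first by apply: NGD => //; apply: NGN; apply: NG_sum => j; exact: NG_unit.
  suff H : forall i : 'I_r, (i < r - 2)%N -> (x - s) 0 i = x 0 j0.
    by move=> i i' hi hi'; rewrite H // H.
  move=> i hi; rewrite !mxE /s unitv_sum //; case: pickP => [b /eqP hb|hnb].
    subst i; by rewrite /d -hdiff // opprB addrC subrK.
  have : i = j0.
    apply/eqP; apply: contraT => ne; case: (onto i hi ne) => b hb.
    by have := hnb b; rewrite hb eqxx.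
  by move=> ->; rewrite subr0.
have -> : x = (x - s) + s by rewrite subrK.
apply: zspanD.
  apply: zspan_trans (spanbar _ xbar) => a; rewrite -(cf_l p xi a); exact: zspan_gen.
apply: zspan_sub => b; rewrite -(cf_r p xi b); exact: zspan_gen.
Qed.
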